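(* Under the standing setting and assumptions (A1)–(A3) described in the context, assume $\mathcal A$ is star-shaped and $\mathcal A\cap\ker(\pi)=\{0\}$ (absence of good deals). Then $\mathcal R(X)\neq\emptyset$ for every $X\in\mathcal X$.
   Context: Let $\mathcal X$ be a Hausdorff, first countable, locally convex topological vector space over $\mathbb R$, partially ordered by a partial order $\geq$ with positive cone $\mathcal X_+=\{X\in\mathcal X: X\geq 0\}$. Let $\mathcal M\subset\mathcal X$ be a vector subspace with $1<\dim\mathcal M<\infty$, carrying the relative topology, and let $\pi:\mathcal M\to\mathbb R$ be linear with $\ker(\pi)=\{Z\in\mathcal M:\pi(Z)=0\}$. Standing assumptions: (A1) there is $U\in\mathcal M\cap\mathcal X_+$ with $\pi(U)=1$; (A2) $\mathcal A\subsetneq\mathcal X$ is closed, contains $0$, and satisfies $\mathcal A+\mathcal X_+\subset\mathcal A$; (A3) the map $\rho(X)=\inf\{\pi(Z): Z\in\mathcal M,\ X+Z\in\mathcal A\}$ is finitely valued and continuous on $\mathcal X$. The optimal payoff map is $\mathcal R(X)=\{Z\in\mathcal M: X+Z\in\mathcal A,\ \pi(Z)=\rho(X)\}$. $\mathcal A$ is star-shaped if $X\in\mathcal A$ implies $\lambda X\in\mathcal A$ for all $\lambda\in[0,1]$. *)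

(* Defs.v *)
From HB Require Import structures.
From mathcomp Require Import all_boot all_order all_algebra.
From mathcomp Require Import all_classical all_reals all_analysis.
Set Implicit Arguments. Unset Strict Implicit. Unset Printing Implicit Defensive.
Import Order.TTheory GRing.Theory Num.Theory.
Local Open Scope classical_set_scope.
Local Open Scope ring_scope.

Definition first_countable (T : topologicalType) : Prop :=
  forall x : T, exists B : nat -> set T,
    (forall n, nbhs x (B n)) /\ (forall U, nbhs x U -> exists n, B n `<=` U).

Definition partial_order_on (E : Type) (le : E -> E -> Prop) : Prop :=
  (forall x, le x x) /\ (forall x y, le x y -> le y x -> x = y) /\
  (forall x y z, le x y -> le y z -> le x z).

Definition is_subspace (R : numDomainType) (E : lmodType R) (M : set E) : Prop :=
  M 0 /\ (forall x y, M x -> M y -> M (x + y)) /\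
  (forall (a : R) x, M x -> M (a *: x)).

Definition has_dim (R : numDomainType) (E : lmodType R) (M : set E) (n : nat) : Prop :=
  exists b : 'I_n -> E,
    (forall c : 'I_n -> R, \sum_(i < n) c i *: b i = 0 -> forall i, c i = 0) /\
    M = [set x | exists c : 'I_n -> R, x = \sum_(i < n) c i *: b i].

Definition linear_on (R : numDomainType) (E : lmodType R) (M : set E) (pi : E -> R) : Prop :=
  (forall x y, M x -> M y -> pi (x + y) = pi x + pi y) /\
  (forall (a : R) x, M x -> pi (a *: x) = a * pi x).

Definition costs (R : realType) (E : lmodType R) (M A : set E) (pi : E -> R) (X : E) : set R :=
  [set pi Z | Z in [set Z | M Z /\ A (X + Z)]].

Definition rho (R : realType) (E : lmodType R) (M A : set E) (pi : E -> R) (X : E) : R :=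
  inf (costs M A pi X).

Definition optR (R : realType) (E : lmodType R) (M A : set E) (pi : E -> R) (X : E) : set E :=
  [set Z | M Z /\ A (X + Z) /\ pi Z = rho M A pi X].

Definition star_shaped (R : realType) (E : lmodType R) (A : set E) : Prop :=
  forall X (l : R), A X -> 0 <= l <= 1 -> A (l *: X).

(* Main.v *)
Require Import Defs.
From HB Require Import structures.
From mathcomp Require Import all_boot all_order all_algebra.
From mathcomp Require Import all_classical all_reals all_analysis.
From mathcomp Require Import lra.
Import Order.TTheory GRing.Theory Num.Theory numFieldTopology.Exports.
Local Open Scope classical_set_scope.
Local Open Scope ring_scope.

Lemma contD_tvs (R : realType) (E : tvsType R) (T : topologicalType) (f g : T -> E) :
  continuous f -> continuous g -> continuous (fun x => f x + g x).
Proof.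
move=> cf cg x.
apply: (@continuous2_cvg _ E E E _ _ f g (fun a b => a + b)).
- exact: (@add_continuous E (f x, g x)).
- exact: cf.
- exact: cg.
Qed.

Lemma contZ_tvs (R : realType) (E : tvsType R) (T : topologicalType) (s : T -> R) (f : T -> E) :
  continuous s -> continuous f -> continuous (fun x => s x *: f x).
Proof.
move=> cs cf x.
apply: (@continuous2_cvg _ R^o E E _ _ s f (fun a b => a *: b)).
- exact: (@scale_continuous R E (s x, f x)).
- exact: cs.
- exact: cf.
Qed.

Lemma cont_sum_tvs (R : realType) (E : tvsType R) (T : topologicalType) (I : Type) (r : seq I)
  (F : I -> T -> E) :
  (forall i, continuous (F i)) -> continuous (fun x => \sum_(i <- r) F i x).
Proof.
move=> cF; elim: r => [|i r IH].
  under eq_fun do rewrite big_nil; exact: cst_continuous.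
under eq_fun do rewrite big_cons; exact: contD_tvs.
Qed.

Section Test.
Variables (R : realType) (n : nat) (E : tvsType R) (b : 'I_n -> E) (p : 'I_n -> R).
Let L (d : 'rV[R]_n) : E := \sum_(i < n) d ord0 i *: b i.
Let f (d : 'rV[R]_n) : R := \sum_(i < n) d ord0 i * p i.
Lemma Lc : continuous L.
Proof.
apply: cont_sum_tvs => i; apply: contZ_tvs; [exact: coord_continuous | exact: cst_continuous].
Qed.
Lemma fc : continuous f.
Proof.
apply: (@cont_sum_tvs R R^o) => i.
apply: (@contZ_tvs R R^o _ (fun d : 'rV[R]_n => d ord0 i) (fun=> p i)); [exact: coord_continuous | exact: cst_continuous].
Qed.
Lemma fstc : continuous (fun z : R * 'rV[R]_n => z.1).
Proof. move=> z; exact: cvg_fst. Qed.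
Lemma sndc : continuous (fun z : R * 'rV[R]_n => z.2).
Proof. move=> z; exact: cvg_snd. Qed.
Lemma gc (X : E) : continuous (fun z : R * 'rV[R]_n => z.1 *: X + L z.2).
Proof.
apply: contD_tvs; first by apply: contZ_tvs; [exact: fstc| exact: cst_continuous].
move=> z; apply: (continuous_comp (sndc z)); exact: Lc.
Qed.
Lemma hc (C : R) : continuous (fun z : R * 'rV[R]_n => z.1 * C - `|f z.2|).
Proof.
move=> z; apply: (@continuousB R R^o _ (fun z : R * 'rV[R]_n => z.1 * C) (fun z => `|f z.2|) z).
  by apply: (@continuousM R _ (fun z : R * 'rV[R]_n => z.1) (fun=> C)); [exact: fstc | exact: cst_continuous].
apply: (@continuous_comp _ _ _ (fun z : R * 'rV[R]_n => z.2) (fun d => `|f d|) z (sndc z)).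
apply: (@continuous_comp _ _ _ f (fun r : R => `|r|) z.2 (fc z.2)).
exact: (@norm_continuous R R^o).
Qed.
End Test.

Theorem mainTheorem9 (R : realType) (E : tvsType R)
  (le : E -> E -> Prop) (M A : set E) (pi : E -> R) :
  hausdorff_space E ->
  first_countable E ->
  partial_order_on le ->
  is_subspace M ->
  (exists n, (1 < n)%N /\ has_dim M n) ->
  linear_on M pi ->
  (* (A1) *)
  (exists U, M U /\ le 0 U /\ pi U = 1) ->
  (* (A2) *)
  closed A -> A 0 -> A <> setT ->
  (forall X P, A X -> le 0 P -> A (X + P)) ->
  (* (A3) *)
  (forall X, (costs M A pi X !=set0) /\ has_lbound (costs M A pi X)) ->
  continuous (fun x : E => rho M A pi x) ->
  (* star-shaped, no good deals *)
  star_shaped A ->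
  (forall Z, M Z -> A Z -> pi Z = 0 -> Z = 0) ->
  forall X : E, optR M A pi X !=set0.
Proof.
move=> _ _ _ [M0 [MD MZ]] [n [_ [b [bind hM]]]] [piD piZ] _ Acl A0 _ _ A3 _ starA ngd X.
pose L (d : 'rV[R]_n) : E := \sum_(i < n) d ord0 i *: b i.
pose p i := pi (b i).
pose f (d : 'rV[R]_n) : R := \sum_(i < n) d ord0 i * p i.
have Mb : forall i, M (b i).
  move=> i; rewrite hM /=; exists (fun j => (j == i)%:R).
  rewrite (bigD1 i) //= eqxx scale1r big1 ?addr0 // => j /negbTE ->; by rewrite scale0r.
have ML : forall d, M (L d).
  by move=> d; rewrite hM; exists (fun i => d ord0 i).
have LM : forall Z, M Z -> exists d, Z = L d.
  move=> Z; rewrite hM => -[c ->]; exists (\row_i c i); rewrite /L.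
  by apply: eq_bigr => i _; rewrite mxE.
have piL : forall d, pi (L d) = f d.
  move=> d.
  have : (fun z y => M z /\ pi z = y) (L d) (f d).
    apply: (big_ind2 (fun (z : E) (y : R) => M z /\ pi z = y)) => [|z1 y1 z2 y2 [Mz1 <-] [Mz2 <-]|i _].
    - split => //; by have := piZ 0 0 M0; rewrite scale0r mul0r.
    - by split; [exact: MD | exact: piD].
    - by split; [exact: MZ | rewrite piZ].
  by case.
have Lind : forall d, L d = 0 -> d = 0.
  move=> d Ld0; apply/rowP => i; rewrite mxE; exact: (bind (fun j => d ord0 j) Ld0 i).
have LZ : forall a d, L (a *: d) = a *: L d.
  move=> a d; rewrite /L scaler_sumr; apply: eq_bigr => i _; by rewrite mxE scalerA.
have fZ : forall a d, f (a *: d) = a * f d.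
  move=> a d; rewrite /f mulr_sumr; apply: eq_bigr => i _; by rewrite mxE mulrA.
have cL : continuous L := @Lc _ _ _ b.
have cf : continuous f := @fc _ _ p.
have [cne clb] := A3 X.
set rho0 := rho M A pi X.
have lb : forall d, A (X + L d) -> rho0 <= f d.
  move=> d Ad; rewrite -piL /rho0 /rho; apply: (ge_inf clb).
  by exists (L d).
have approx : forall e, 0 < e -> exists d, A (X + L d) /\ f d < rho0 + e.
  move=> e e0; have [y [Z [MZ' AZ] <-] ylt] := inf_adherent e0 (conj cne clb).
  have [d dE] := LM Z MZ'; exists d; rewrite -piL -dE; split => //.

have bnd : exists B : R, forall d, A (X + L d) -> f d <= rho0 + 1 -> `|d| <= B.
  apply: contrapT => nB.
  have big : forall B, exists d, [/\ A (X + L d), f d <= rho0 + 1 & B < `|d|].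
    move=> B; apply: contrapT => h; apply: nB; exists B => d Ad fd.
    rewrite leNgt; apply/negP => Bd; apply: h; by exists d.
  pose C := `|rho0| + 1.
  pose Q1 := `[(0:R), 1] `*` [set d : 'rV[R]_n | `|d| <= 1].
  pose Q2 := (fun z : R * 'rV[R]_n => z.1 *: X + L z.2) @^-1` A.
  pose Q3 := (fun z : R * 'rV[R]_n => z.1 * C - `|f z.2|) @^-1` [set x : R | 0 <= x].
  pose Q4 := (fun z : R * 'rV[R]_n => `|z.2|) @^-1` [set x : R | 1 <= x].
  pose Q := Q1 `&` Q2 `&` Q3 `&` Q4.
  have cQ : compact Q.
    apply: compact_closedI; last first.
      apply: preimage_closed; last exact: closed_ge.
      move=> z _; exact: (@continuous_comp _ _ _ (fun z : R * 'rV[R]_n => z.2) (fun d : 'rV[R]_n => `|d|) z (@sndc R n z) (@norm_continuous R 'rV[R]_n z.2)).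
    apply: compact_closedI; last first.
      by apply: preimage_closed; [move=> z _; exact: hc | exact: closed_ge].
    apply: compact_closedI; last first.
      by apply: preimage_closed; [move=> z _; exact: gc | exact: Acl].
    apply: compact_setX; first exact: segment_compact.
    apply: bounded_closed_compact.
      exists 1; split => // M1 M1gt d /= d1; apply: (le_trans d1); exact: ltW.
    apply: (@preimage_closed _ _ (fun d : 'rV[R]_n => `|d|) [set x : R | x <= 1]); last exact: closed_le.
    move=> d _; exact: (@norm_continuous R 'rV[R]_n d).
  have inQ : forall d, A (X + L d) -> f d <= rho0 + 1 -> 1 <= `|d| ->
      Q (`|d|^-1, `|d|^-1 *: d).
    move=> d Ad fd d1.
    have r0 : 0 < `|d| by apply: lt_le_trans d1.
    have nZ : Num.norm (`|d|^-1 *: d) = 1.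
      by rewrite normrZ ger0_norm ?invr_ge0 ?ltW // mulVf // gt_eqF.
    split; [split; [split|] |].
    - split => /=; last by rewrite nZ.
      by rewrite in_itv /= invr_ge0 ltW //= invf_le1.
    - rewrite /Q2 /= LZ -scalerDr; apply: starA => //.
      by rewrite invr_ge0 ltW //= invf_le1.
    - rewrite /Q3 /= fZ normrM normfV normr_id subr_ge0.
      rewrite ler_pM2l ?invr_gt0 //.
      have h1 := lb d Ad; have h2 := ler_norm rho0; have h3 := ler_normr rho0 rho0.
      have h4 : - `|rho0| <= rho0 by rewrite lerNl -normrN ler_norm.
      rewrite /C ler_norml; apply/andP; split; lra.
    - by rewrite /Q4 /= nZ.
  have [d0 [Ad0 fd0 d0gt]] := big 1.
  have Qne : Q !=set0 by exists (`|d0|^-1, `|d0|^-1 *: d0); apply: inQ => //; exact: ltW.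
  have [z0 z0Q z0min] := compact_EVT_min Qne cQ (continuous_subspaceT (@fstc R n)).
  have [[[[t0a _] Az0] Cz0] nz0] : Q z0 by rewrite inE in z0Q.
  move: t0a; rewrite /= in_itv /= => /andP[t0ge _].
  case: (ltgtP 0 z0.1) t0ge => [t0pos _|//|t0E _].
    have [d [Ad fd dgt]] := big (1 + z0.1^-1).
    have d1 : 1 <= `|d|.
      apply: ltW; apply: le_lt_trans dgt; rewrite lerDl invr_ge0; exact: ltW.
    have := z0min (`|d|^-1, `|d|^-1 *: d); rewrite inE => /(_ (inQ d Ad fd d1)) /=.
    have dpos : 0 < `|d| by apply: lt_le_trans d1.
    rewrite leNgt => /negP; apply; rewrite invf_plt ?posrE //.
    apply: le_lt_trans dgt; rewrite lerDr //.
  move: Az0 Cz0 nz0; rewrite /Q2 /Q3 /Q4 /= -t0E scale0r add0r mul0r sub0r oppr_ge0 normr_le0 => Az0 /eqP fz0 nz0.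
  have := ngd _ (ML z0.2) Az0; rewrite piL fz0 => /(_ erefl) /Lind z0E.
  by move: nz0; rewrite z0E normr0 ler10.
have [B hB] := bnd.
pose S := [set d | A (X + L d)] `&` [set d | f d <= rho0 + 1].
have cS : compact S.
  apply: bounded_closed_compact.
    exists B; split; first exact: num_real.
    move=> M1 M1gt d [Ad fd] /=; apply: le_trans (hB d Ad fd) _; exact: ltW.
  apply: closedI.
    apply: (@preimage_closed _ _ (fun d => X + L d) A); last exact: Acl.
    by move=> d _; apply: contD_tvs; [exact: cst_continuous | exact: cL].
  apply: (@preimage_closed _ _ f [set x : R | x <= rho0 + 1]); last exact: closed_le.
  by move=> d _; exact: cf.
have Sne : S !=set0.
  have [d [Ad fd]] := approx 1 ltr01; exists d; split => //; exact: ltW.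
have [c cS' cmin] := compact_EVT_min Sne cS (continuous_subspaceT cf).
have [Ac fc'] : S c by rewrite inE in cS'.
exists (L c); split; first exact: ML.
split; first exact: Ac.
rewrite piL; apply/eqP; rewrite eq_le lb // andbT.
apply/ler_addgt0Pr => e e0.
have [e1|e1] := leP e 1.
  have [d [Ad fd]] := approx e e0.
  have dS : d \in S by rewrite inE; split => //; apply: ltW; apply: lt_le_trans fd _; rewrite lerD2l.
  exact: le_trans (cmin d dS) (ltW fd).
have [d [Ad fd]] := approx 1 ltr01.
have dS : d \in S by rewrite inE; split => //; exact: ltW.
apply: le_trans (cmin d dS) _; apply: ltW; apply: lt_trans fd _; by rewrite ltrD2l.
Qed.
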